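(* Let $(S,\curlyvee)$ be a $\curlyvee$-algebra and $a,b,c,d,i\in S$. If $d\lesssim a\sqcup i$, $d\lesssim b\sqcup i$, $d\lesssim c\sqcup i$, $d\lesssim(a\curlyvee b)\sqcup i$ and $d\lesssim(b\curlyvee c)\sqcup i$, then $d\lesssim(a\curlyvee c)\sqcup i$.
   Context: A $\curlyvee$-algebra is an algebra $(S,\curlyvee)$ with one binary operation such that, defining $a\sqcup b=a\curlyvee(a\curlyvee b)$ and $a\lesssim b$ iff $b\sqcup a=b$: $\sqcup$ is associative, $a\sqcup a=a$ and $a\sqcup b=(a\sqcup b)\sqcup a$ (so $(S,\sqcup)$ is a left regular band); $\curlyvee$ is commutative and idempotent; $(a\curlyvee b)\sqcup(a\sqcup b)=a\sqcup b$; $a\sqcup(b\curlyvee c)=(a\sqcup b)\curlyvee(a\sqcup c)$; and for all $a,b,c,d$, if $d\lesssim a$, $d\lesssim b$, $d\lesssim c$, $d\lesssim a\curlyvee b$, $d\lesssim b\curlyvee c$ then $d\lesssim a\curlyvee c$. *)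

(* Defs.v *)
Section VeeAlg.
Context {S : Type} (vee : S -> S -> S).

Definition vsqcup (a b : S) : S := vee a (vee a b).

Definition vlesssim (a b : S) : Prop := vsqcup b a = b.

Definition is_vee_algebra : Prop :=
  (forall a b c, vsqcup a (vsqcup b c) = vsqcup (vsqcup a b) c) /\
  (forall a, vsqcup a a = a) /\
  (forall a b, vsqcup a b = vsqcup (vsqcup a b) a) /\
  (forall a b, vee a b = vee b a) /\
  (forall a, vee a a = a) /\
  (forall a b, vsqcup (vee a b) (vsqcup a b) = vsqcup a b) /\
  (forall a b c, vsqcup a (vee b c) = vee (vsqcup a b) (vsqcup a c)) /\
  (forall a b c d,
      vlesssim d a -> vlesssim d b -> vlesssim d c ->
      vlesssim d (vee a b) -> vlesssim d (vee b c) ->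
      vlesssim d (vee a c)).
End VeeAlg.

(* Main.v *)
Require Import Defs.

Theorem lemma4p4 (S : Type) (vee : S -> S -> S) (HS : is_vee_algebra vee)
  (a b c d i : S) :
  vlesssim vee d (vsqcup vee a i) ->
  vlesssim vee d (vsqcup vee b i) ->
  vlesssim vee d (vsqcup vee c i) ->
  vlesssim vee d (vsqcup vee (vee a b) i) ->
  vlesssim vee d (vsqcup vee (vee b c) i) ->
  vlesssim vee d (vsqcup vee (vee a c) i).
Proof.
  destruct HS as (A & _ & L3 & _ & _ & _ & D & Ax).
  unfold vlesssim.
  set (j := vsqcup vee) in *.
  assert (fwd : forall x, j (j x i) d = j x i -> j (j i x) (j i d) = j i x).
  { intros x H.
    rewrite A, <- L3.
    transitivity (j i (j (j x i) d)).
    - rewrite !A, <- L3. reflexivity.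
    - rewrite H, A, <- L3. reflexivity. }
  intros Ha Hb Hc Hab Hbc.
  apply fwd in Ha, Hb, Hc, Hab, Hbc.
  unfold j in Hab, Hbc. rewrite D in Hab, Hbc. fold j in Hab, Hbc.
  pose proof (Ax _ _ _ _ Ha Hb Hc Hab Hbc) as Hac.
  unfold vlesssim in Hac. fold j in Hac.
  assert (E : j i (vee a c) = vee (j i a) (j i c)) by (apply D).
  rewrite <- E in Hac.
  set (y := vee a c) in *.
  rewrite A, <- L3 in Hac.
  transitivity (j y (j (j i y) d)).
  - rewrite !A, <- L3. reflexivity.
  - rewrite Hac, A, <- L3. reflexivity.
Qed.
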